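(* Let $\psi:\mathbb{R}\to\mathbb{R}$ satisfy $|\psi(x)|\leq C(1+|x|)^{-1-\varepsilon}$ for all $x\in\mathbb{R}$, for some constants $C,\varepsilon>0$. Let $\{a_I:I\in\mathcal{D}\}$ be independent random variables on $(\Omega,\mathscr{F},\mathscr{P})$ with $a_I\in\mathscr{G}(\nu)$ for every $I$, for some fixed $\nu>0$, and with $\sum_{I\in\mathcal{D}}\mathscr{E}|a_I|<\infty$. Then for every $x\neq y$ in $\mathbb{R}$, the series $$K(x,y;\omega)=\sum_{I\in\mathcal{D}}a_I(\omega)\psi_I(x)\psi_I(y)$$ converges for $\mathscr{P}$-almost every $\omega\in\Omega$.
   Context: $\mathcal{D}=\bigcup_{j\in\mathbb{Z}}\mathcal{D}^j$ is the family of dyadic intervals of $\mathbb{R}$, $\mathcal{D}^j=\{I^j_k=[k2^{-j},(k+1)2^{-j}):k\in\mathbb{Z}\}$. For $I=I^j_k$, $\psi_I(x)=2^{j/2}\psi(2^jx-k)$. For an integrable random variable $X$, $\eta_{X-\mathscr{E}X}(\lambda)=\log \mathscr{E}e^{\lambda(X-\mathscr{E}X)}$, and $X\in\mathscr{G}(\nu)$ means $X$ is integrable and $\eta_{X-\mathscr{E}X}(\lambda)\leq \lambda^2\nu/2$ for all $\lambda\in\mathbb{R}$. (The series is understood along any fixed enumeration of $\mathcal{D}$.) *)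

(* Defs.v *)
From HB Require Import structures.
From mathcomp Require Import all_boot all_order all_algebra.
From mathcomp Require Import all_classical all_reals all_analysis.
Set Implicit Arguments. Unset Strict Implicit. Unset Printing Implicit Defensive.
Import Order.TTheory GRing.Theory Num.Theory.
Local Open Scope classical_set_scope.
Local Open Scope ring_scope.

(* Dyadic intervals I^j_k = [k 2^-j, (k+1) 2^-j) are indexed by (j,k) : int * int. *)
Definition dyadic := (int * int)%type.

Definition psiI {R : realType} (psi : R -> R) (I : dyadic) (x : R) : R :=
  (2 : R) `^ ((I.1)%:~R / 2) * psi ((2 : R) `^ ((I.1)%:~R) * x - (I.2)%:~R).

Definition mutually_independent {d} {T : measurableType d} {R : realType}
  (P : probability T R) (I : eqType) (X : I -> T -> R) : Prop :=
  forall (s : seq I) (B : I -> set R),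
    uniq s -> (forall i, i \in s -> measurable (B i)) ->
    P (\big[setI/setT]_(i <- s) (X i @^-1` B i)) =
    (\prod_(i <- s) P (X i @^-1` B i))%E.

(* X \in G(nu): X integrable and eta_{X - E X}(lambda) <= lambda^2 nu / 2 for all
   real lambda, where eta_Y(lambda) = log E e^{lambda Y}; stated equivalently
   (log is increasing) as E e^{lambda (X - E X)} <= exp(lambda^2 nu / 2). *)
Definition subgaussian {d} {T : measurableType d} {R : realType}
  (P : probability T R) (nu : R) (X : T -> R) : Prop :=
  P.-integrable setT (EFin \o X) /\
  forall lambda : R,
    ('E_P[fun w => expR (lambda * (X w - fine 'E_P[X]))] <=
     (expR (lambda ^+ 2 * nu / 2))%:E)%E.

(* Main.v *)
Require Import Defs.
From HB Require Import structures.
From mathcomp Require Import all_boot all_order all_algebra.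
From mathcomp Require Import all_classical all_reals all_analysis.
From mathcomp Require Import ring lra measurable_realfun.
Import Order.TTheory GRing.Theory Num.Theory numFieldNormedType.Exports.
Local Open Scope classical_set_scope.
Local Open Scope ring_scope.

Lemma psi_bound1 (R : realType) (psi : R -> R) (C eps : R) :
  0 < eps -> (forall x : R, `|psi x| <= C * (1 + `|x|) `^ (- 1 - eps)) ->
  forall u, `|psi u| * (1 + `|u|) <= C.
Proof.
move=> e0 H u.
have h1 : 1 <= 1 + `|u| by rewrite lerDl.
have h0 : 0 < 1 + `|u| by apply: lt_le_trans h1.
have hp : (1 + `|u|) `^ (- 1 - eps) <= (1 + `|u|)^-1.
  rewrite -(powR_inv1 (ltW h0)); apply: (ler_powR h1); lra.
have C0 : 0 <= C.
  have c := H u.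
  have : 0 <= C * (1 + `|u|) `^ (-1 - eps) by apply: le_trans c.
  by rewrite pmulr_lge0 // powR_gt0.
rewrite -ler_pdivlMr // mulrC.
apply: le_trans (H u) _; rewrite [X in _ <= X]mulrC; exact: ler_wpM2l.
Qed.

Lemma psi_prod_bound (R : realType) (psi : R -> R) (C : R) x y :
  (forall u, `|psi u| * (1 + `|u|) <= C) -> x != y ->
  forall I : dyadic, `|psiI psi I x * psiI psi I y| <= C ^+ 2 / `|x - y|.
Proof.
move=> B xy [j k]; rewrite /psiI /=.
set s := (2 : R) `^ (j%:~R / 2).
set t := (2 : R) `^ j%:~R.
have st : s * s = t.
  rewrite /s /t -powRD; last by rewrite pnatr_eq0 implybT.
  by congr (_ `^ _); field.
have t0 : 0 < t by rewrite powR_gt0.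
have dxy : 0 < `|x - y| by rewrite normr_gt0 subr_eq0.
set u := t * x - k%:~R; set v := t * y - k%:~R.
rewrite -/u -/v. have -> : s * psi u * (s * psi v) = t * (psi u * psi v).
  by rewrite -st; ring.
rewrite normrM (gtr0_norm t0) normrM ler_pdivlMr //.
have huv : t * `|x - y| <= `|u| + `|v|.
  have -> : t * `|x - y| = `|u - v|.
    rewrite /u /v; have -> : t * x - k%:~R - (t * y - k%:~R) = t * (x - y) by ring.
    by rewrite normrM gtr0_norm.
  by rewrite -normrN opprB; apply: (le_trans (ler_normB _ _)); rewrite addrC.
have Bu := B u; have Bv := B v.
have A0 := normr_ge0 (psi u); have B0 := normr_ge0 (psi v).
have u0 := normr_ge0 u; have v0 := normr_ge0 v.
have H2 : (`|psi u| * (1 + `|u|)) * (`|psi v| * (1 + `|v|)) <= C * C.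
  apply: ler_pM => //; apply: mulr_ge0 => //; lra.
rewrite expr2; apply: le_trans H2.
have hpq : t * `|x - y| <= (1 + `|u|) * (1 + `|v|) by nra.
have hAB : 0 <= `|psi u| * `|psi v| by apply: mulr_ge0.
have := ler_wpM2l hAB hpq. 
have -> : t * (`|psi u| * `|psi v|) * `|x - y| = `|psi u| * `|psi v| * (t * `|x - y|) by ring.
move=> h; apply: le_trans h _; rewrite le_eqVlt; apply/orP; left; apply/eqP; ring.
Qed.

Theorem theorem3p1 (d : measure_display) (T : measurableType d) (R : realType)
  (P : probability T R) (psi : R -> R) (C eps nu : R)
  (a : dyadic -> {RV P >-> R}) :
  0 < C -> 0 < eps ->
  (forall x : R, `|psi x| <= C * (1 + `|x|) `^ (- 1 - eps)) ->
  mutually_independent P (fun I => (a I : T -> R)) ->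
  0 < nu ->
  (forall I, subgaussian P nu (a I)) ->
  (\esum_(I in [set: dyadic]) 'E_P[fun w => `|a I w|%R] < +oo)%E ->
  forall (e : nat -> dyadic), bijective e ->
  forall x y : R, x != y ->
  {ae P, forall w, cvgn (series (fun n => a (e n) w * psiI psi (e n) x * psiI psi (e n) y))}.
Proof.
move=> C0 e0 Hpsi _ _ _ Hsum e be x y xy.
have B := @psi_prod_bound R psi C x y (@psi_bound1 R psi C eps e0 Hpsi) xy.
set M := C ^+ 2 / `|x - y|.
pose F := fun w => (\sum_(n <oo) (`|a (e n) w|)%:E)%E.
have mf : forall n, measurable_fun [set: T] (EFin \o (fun w : T => (`|a (e n) w| : R))).
  move=> n; apply: measurableT_comp => //; apply: measurableT_comp => //.
have mF : measurable_fun [set: T] F.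
  rewrite /F; apply: (@ge0_emeasurable_sum _ T R setT (fun n w => (`|a (e n) w|)%:E) xpredT) => // k _; exact: mf.
have F0 : forall w, (0 <= F w)%E.
  by move=> w; apply: nneseries_ge0 => n _; rewrite lee_fin.
have iF : (\int[P]_w F w < +oo)%E.
  rewrite /F integral_nneseries //.
  move: Hsum; rewrite (@reindex_esum R nat dyadic setT setT e) ?setTT_bijective //.
  rewrite -nneseries_esumT; last by move=> n; rewrite unlock; apply: integral_ge0 => w _; rewrite lee_fin.
  by under eq_eseriesr do rewrite expectation.unlock.
have intF : P.-integrable setT F.
  apply/integrableP; split => //.
  by under eq_integral => w _ do rewrite gee0_abs //.
have := integrable_ae measurableT intF.
apply: filterS => w /(_ I) Fw.
apply: normed_cvg; apply: nondecreasing_is_cvgn.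
  by apply: nondecreasing_series => n _ _; apply: normr_ge0.
exists (M * fine (F w)) => _ [n _ <-].
apply: (@le_trans _ _ (\sum_(0 <= k < n) M * `|a (e k) w|)).
  apply: ler_sum => k _ /=; rewrite -mulrA normrM mulrC ler_wpM2r //.
have M0 : 0 <= M by apply: divr_ge0; [exact: sqr_ge0 | exact: normr_ge0].
rewrite -mulr_sumr; apply: ler_wpM2l => //.
rewrite -lee_fin fineK //.
rewrite /F -sumEFin.
exact: nneseries_lim_ge.
Qed.
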